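(* Let $\gamma_X$ and $\gamma_Y$ be any two dynamic metric spaces. Then \[d_{\mathrm{I}}(\beta_0^{\gamma_X},\beta_0^{\gamma_Y})\le 2\cdot d_{\mathtt{dyn}}(\gamma_X,\gamma_Y).\]
   Context: A dynamic metric space (DMS) is a pair $\gamma_X=(X,d_X(\cdot))$ where $X$ is a nonempty finite set and $d_X(\cdot):\mathbf{R}\times X\times X\to\mathbf{R}_+$ satisfies: each $d_X(t)$ is a pseudometric, some $d_X(t_0)$ is a metric, and $t\mapsto d_X(t)(x,x')$ is continuous for all $x,x'$. $\mathbf{Int}$ is the set of finite closed intervals of $\mathbf{R}$. For $I\in\mathbf{Int}$, $(\bigvee_I d_X)(x,x'):=\min_{s\in I}d_X(s)(x,x')$; for $I=[u,u']$, $I^\varepsilon=[u-\varepsilon,u'+\varepsilon]$, and $[t]^\varepsilon=[t-\varepsilon,t+\varepsilon]$. A tripod between $X$ and $Y$ is a set $Z$ with surjections $\varphi_X:Z\to X$, $\varphi_Y:Z\to Y$; it is an $\varepsilon$-tripod between $\gamma_X,\gamma_Y$ if for all $t\in\mathbf{R}$, $z,z'\in Z$: $(\bigvee_{[t]^\varepsilon}d_X)(\varphi_X(z),\varphi_X(z'))\le d_Y(t)(\varphi_Y(z),\varphi_Y(z'))+2\varepsilon$ and $(\bigvee_{[t]^\varepsilon}d_Y)(\varphi_Y(z),\varphi_Y(z'))\le d_X(t)(\varphi_X(z),\varphi_X(z'))+2\varepsilon$. $d_{\mathtt{dyn}}(\gamma_X,\gamma_Y)$ is the minimum over tripods of the infimum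 of $\varepsilon$ for which the tripod is an $\varepsilon$-tripod ($\infty$ if none). For symmetric $d$ vanishing on the diagonal, $\mathcal{R}_\delta(X,d)$ is the simplicial complex on $X$ with simplices the nonempty $\sigma$ with $d(x,x')\le\delta$ for all $x,x'\in\sigma$. The Betti-0 function $\beta_0^{\gamma_X}:\mathbf{Int}\times\mathbf{R}_+\to\mathbf{Z}_+$ sends $(I,\delta)$ to $\dim\mathrm{H}_0(\mathcal{R}_\delta(X,\bigvee_I d_X))$ (homology over a fixed field). For functions $F,G:\mathbf{Int}\times\mathbf{R}_+\to\mathbf{Z}_+$, $d_{\mathrm{I}}(F,G):=\inf\{\varepsilon\ge0:\forall (I,\delta),\ F(I,\delta)\ge G(I^\varepsilon,\delta+\varepsilon)\text{ and }G(I,\delta)\ge F(I^\varepsilon,\delta+\varepsilon)\}$. *)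

(* Defs.v *)
From HB Require Import structures.
From mathcomp Require Import all_boot all_order all_algebra.
From mathcomp Require Import all_classical all_reals all_analysis.
Set Implicit Arguments. Unset Strict Implicit. Unset Printing Implicit Defensive.
Import Order.TTheory GRing.Theory Num.Theory.
Import numFieldNormedType.Exports.
Local Open Scope classical_set_scope.
Local Open Scope ring_scope.

Section DMS.
Variable R : realType.

Definition is_pseudometric (X : Type) (d : X -> X -> R) : Prop :=
  [/\ forall x y, 0 <= d x y,
      forall x, d x x = 0,
      forall x y, d x y = d y x &
      forall x y z, d x z <= d x y + d y z].

Definition is_DMS (X : finType) (d : R -> X -> X -> R) : Prop :=
  [/\ (0 < #|X|)%N,
      forall t, is_pseudometric (d t),
      exists t0, forall x y, d t0 x y = 0 -> x = y &
      forall x y, continuous (fun t : R => d t x y)].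

(* finite closed intervals [u, u'] are represented by pairs (u, u') with u <= u' *)
(* (\bigvee_I d)(x,x') = min_{s in I} d(s)(x,x')  (min = inf, by continuity/compactness) *)
Definition bigvee (X : Type) (d : R -> X -> X -> R) (I : R * R) (x y : X) : R :=
  inf [set d s x y | s in `[I.1, I.2]].

Definition int_eps (I : R * R) (e : R) : R * R := (I.1 - e, I.2 + e).

Definition rips_simplex (X : finType) (dd : X -> X -> R) (delta : R) (s : {set X}) : bool :=
  (s != finset.set0) && [forall x in s, forall y in s, dd x y <= delta].

(* Boundary map d_1 : C_1 -> C_0 of the Rips complex over the field F, as a matrix
   whose rows are the boundaries y - x of the (oriented) 1-simplices {x, y}
   (one row per ordered pair (x,y); rows for non-edges are 0, which does not
   change the image). *)
Definition rips_boundary1 (F : fieldType) (X : finType) (dd : X -> X -> R) (delta : R)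
  : 'M[F]_(#|{: X * X}|, #|{: X}|) :=
  \matrix_(i, j)
    let p : X * X := enum_val i in
    let v : X := enum_val j in
    if (p.1 != p.2) && rips_simplex dd delta [set p.1; p.2]
    then ((v == p.2)%:R - (v == p.1)%:R) else 0.

Definition dimH0_rips (F : fieldType) (X : finType) (dd : X -> X -> R) (delta : R) : nat :=
  (#|{: X}| - \rank (rips_boundary1 F dd delta))%N.

Definition beta0 (F : fieldType) (X : finType) (d : R -> X -> X -> R)
  (I : R * R) (delta : R) : nat :=
  dimH0_rips F (bigvee d I) delta.

Definition interleaved (Fn Gn : R * R -> R -> nat) (e : R) : Prop :=
  0 <= e /\
  forall (I : R * R) (delta : R), I.1 <= I.2 -> 0 <= delta ->
    (Gn (int_eps I e) (delta + e)%R <= Fn I delta)%N /\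
    (Fn (int_eps I e) (delta + e)%R <= Gn I delta)%N.

Definition dI (Fn Gn : R * R -> R -> nat) : \bar R :=
  ereal_inf [set (e%:E) | e in interleaved Fn Gn].

Definition is_eps_tripod (X Y Z : Type) (dX : R -> X -> X -> R) (dY : R -> Y -> Y -> R)
  (phX : Z -> X) (phY : Z -> Y) (e : R) : Prop :=
  forall (t : R) (z z' : Z),
    bigvee dX (t - e, t + e) (phX z) (phX z') <= dY t (phY z) (phY z') + 2 * e /\
    bigvee dY (t - e, t + e) (phY z) (phY z') <= dX t (phX z) (phX z') + 2 * e.

Definition tripod_cost (X Y Z : Type) (dX : R -> X -> X -> R) (dY : R -> Y -> Y -> R)
  (phX : Z -> X) (phY : Z -> Y) : \bar R :=
  ereal_inf [set (e%:E) | e in is_eps_tripod dX dY phX phY].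

Definition surj (A B : Type) (f : A -> B) : Prop := forall b, exists a, f a = b.

Definition ddyn (X Y : Type) (dX : R -> X -> X -> R) (dY : R -> Y -> Y -> R) : \bar R :=
  ereal_inf [set c | exists (Z : Type) (phX : Z -> X) (phY : Z -> Y),
                       [/\ surj phX, surj phY & c = tripod_cost dX dY phX phY]].

End DMS.

(* Main.v *)
Require Import Defs.
From HB Require Import structures.
From mathcomp Require Import all_boot all_order all_algebra.
From mathcomp Require Import all_classical all_reals all_analysis.
From mathcomp Require Import lra zify.
Set Implicit Arguments. Unset Strict Implicit. Unset Printing Implicit Defensive.
Import Order.TTheory GRing.Theory Num.Theory.
Section Aux.
Variable R : realType.
Local Open Scope classical_set_scope.
Local Open Scope ring_scope.

Lemma bv_lb (X : Type) (d : R -> X -> X -> R) I x y s :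
  (forall t, 0 <= d t x y) -> I.1 <= s <= I.2 -> bigvee d I x y <= d s x y.
Proof.
move=> h hs; apply: ge_inf.
  by exists 0 => _ [t _ <-]; exact: h.
by exists s => //=; rewrite in_itv /= hs.
Qed.

Lemma bv_adh (X : Type) (d : R -> X -> X -> R) I x y eta :
  (forall t, 0 <= d t x y) -> I.1 <= I.2 -> 0 < eta ->
  exists s, I.1 <= s <= I.2 /\ d s x y < bigvee d I x y + eta.
Proof.
move=> h hI he.
have [|_ [s hs <-] lt] := @inf_adherent R [set d s x y | s in `[I.1, I.2]] eta he.
  split; first by exists (d I.1 x y), I.1 => //=; rewrite in_itv /= lexx hI.
  by exists 0 => _ [t _ <-]; exact: h.
by exists s; split => //; move: hs; rewrite /= in_itv.
Qed.

Lemma bv_ge0 (X : Type) (d : R -> X -> X -> R) I x y :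
  (forall t, 0 <= d t x y) -> 0 <= bigvee d I x y.
Proof.
move=> h; rewrite /bigvee.
case: (eqVneq [set d s x y | s in `[I.1, I.2]] set0) => [->|/set0P ne].
  by rewrite inf0.
by apply: lb_le_inf => // _ [t _ <-]; exact: h.
Qed.

Lemma key (X Y Z : Type) (dX : R -> X -> X -> R) (dY : R -> Y -> Y -> R)
  (phX : Z -> X) (phY : Z -> Y) e I delta z z' :
  (forall t a b, 0 <= dX t a b) -> (forall t a b, 0 <= dY t a b) ->
  is_eps_tripod dX dY phX phY e -> 0 <= e -> I.1 <= I.2 ->
  bigvee dX I (phX z) (phX z') <= delta ->
  bigvee dY (int_eps I (2 * e)) (phY z) (phY z') <= delta + 2 * e.
Proof.
move=> hX hY tri he hI hb; apply/ler_addgt0Pr => eta heta.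
have heta2 : 0 < eta / 2 by rewrite divr_gt0.
have [s [hs lts]] := bv_adh (fun t => hX t (phX z) (phX z')) hI heta2.
have [_ tY] := tri s z z'.
have hJ : (s - e, s + e).1 <= (s - e, s + e).2 by rewrite /=; lra.
have [s' [hs' lts']] := bv_adh (fun t => hY t (phY z) (phY z')) hJ heta2.
have hs'' : (int_eps I (2 * e)).1 <= s' <= (int_eps I (2 * e)).2.
  move: hs hs' => /= /andP[h1 h2] /andP[h3 h4]; apply/andP; split; lra.
apply: le_trans (bv_lb _ hs'') _ => //.
lra.
Qed.


Section Mx.
Variable F : fieldType.

Definition ev (X : finType) (x : X) : 'rV[F]_#|{: X}| := delta_mx 0 (enum_rank x).

Lemma eqrank (X : finType) (j : 'I_#|{: X}|) (y : X) :
  (j == enum_rank y) = (enum_val j == y).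
Proof. by apply/eqP/eqP => [->|<-]; rewrite ?enum_rankK ?enum_valK. Qed.

Lemma edge_sub (X : finType) (dd : X -> X -> R) delta x y :
  dd x x <= delta -> dd x y <= delta -> dd y x <= delta -> dd y y <= delta ->
  (ev y - ev x <= rips_boundary1 F dd delta)%MS.
Proof.
move=> h1 h2 h3 h4; have [->|nxy] := eqVneq x y; first by rewrite subrr sub0mx.
suff <- : row (enum_rank (x, y)) (rips_boundary1 F dd delta) = ev y - ev x.
  exact: row_sub.
have hs : rips_simplex dd delta [set x; y].
  rewrite /rips_simplex; apply/andP; split.
    by apply/set0Pn; exists x; rewrite set21.
  apply/forall_inP => a; rewrite !inE => /orP[]/eqP->;
  apply/forall_inP => b; rewrite !inE => /orP[]/eqP-> //.
apply/rowP => j; rewrite !mxE enum_rankK /= nxy hs /= !eqrank.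
by [].
Qed.

Definition Mf (X Y : finType) (f : X -> Y) : 'M[F]_(#|{: X}|, #|{: Y}|) :=
  \matrix_(i, j) (f (enum_val i) == enum_val j)%:R.

Lemma ev_Mf (X Y : finType) (f : X -> Y) x : ev x *m Mf f = ev (f x).
Proof.
by rewrite /ev -rowE; apply/rowP => j; rewrite !mxE enum_rankK eqrank eq_sym.
Qed.

Lemma row_bd (X : finType) (dd : X -> X -> R) delta i :
  row i (rips_boundary1 F dd delta) =
  if ((enum_val i).1 != (enum_val i).2) &&
     rips_simplex dd delta [set (enum_val i).1; (enum_val i).2]
  then ev (enum_val i).2 - ev (enum_val i).1 else 0.
Proof.
apply/rowP => j; rewrite !mxE /=; case: ifP => _; rewrite ?mxE ?eqrank //.

Qed.


Lemma dir (X Y : finType) (Z : Type) (dX : R -> X -> X -> R) (dY : R -> Y -> Y -> R)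
  (phX : Z -> X) (phY : Z -> Y) e I delta :
  (forall t a b, 0 <= dX t a b) -> (forall t a, dX t a a = 0) ->
  (forall t a b, 0 <= dY t a b) -> Defs.surj phX -> Defs.surj phY ->
  is_eps_tripod dX dY phX phY e -> 0 <= e -> I.1 <= I.2 -> 0 <= delta ->
  (beta0 F dY (int_eps I (2 * e)) (delta + 2 * e) <= beta0 F dX I delta)%N.
Proof.
move=> hX0 hXd hY0 sX sY tri he hI hd.
have [g hg] := choice sX.
pose DX := rips_boundary1 F (bigvee dX I) delta.
pose DY := rips_boundary1 F (bigvee dY (int_eps I (2 * e))) (delta + 2 * e).
pose M := Mf (fun x => phY (g x)).
have kz z z' : bigvee dX I (phX z) (phX z') <= delta ->
    bigvee dY (int_eps I (2 * e)) (phY z) (phY z') <= delta + 2 * e.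
  exact: key hX0 hY0 tri he hI.
have diag x : bigvee dX I x x <= delta.
  have hs : I.1 <= I.1 <= I.2 by rewrite lexx hI.
  have := bv_lb (fun t => hX0 t x x) hs; rewrite hXd => h0.
  exact: le_trans h0 hd.
have H1 : (DX *m M <= DY)%MS.
  apply/row_subP => i; rewrite row_mul row_bd.
  case: ifP => [/andP[_ hs]|_]; last by rewrite mul0mx sub0mx.
  rewrite mulmxBl !ev_Mf.
  move: hs => /andP[_ /forall_inP h].
  have hp a b : a \in [set (enum_val i).1; (enum_val i).2]%SET ->
      b \in [set (enum_val i).1; (enum_val i).2]%SET -> bigvee dX I a b <= delta.
    by move=> ha hb; move: (h a ha) => /forall_inP /(_ b hb).
  by apply: edge_sub; apply: kz; rewrite !hg; apply: hp; rewrite ?set21 ?set22.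
have H2 : (1%:M <= M + DY)%MS.
  apply/row_subP => j; rewrite row1.
  have [z hz] := sY (enum_val j).
  have -> : delta_mx 0 j = ev (enum_val j) by rewrite /ev enum_valK.
  rewrite -[ev _](subrK (ev (phY (g (phX z))))).
  apply: addmx_sub.
    apply: submx_trans (addsmxSr M DY).
    rewrite -hz; apply: edge_sub; apply: kz; rewrite ?hg; exact: diag.
  rewrite -(ev_Mf (fun x => phY (g x))).
  apply: submx_trans (addsmxSl M DY); exact: submxMl.
have H3 : (M + DY <= DY + DX^C *m M)%MS.
  rewrite addsmx_sub addsmxSl andbT.
  have s1 : (M <= (DX + DX^C)%MS *m M)%MS.
    rewrite -{1}[M]mul1mx; apply: submxMr; rewrite sub1mx.
    exact: addsmx_compl_full.
  apply: submx_trans s1 _.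
  rewrite addsmxMr; exact: addsmxS.
have r1 := mxrankS H2; rewrite mxrank1 in r1.
have r2 := mxrankS H3.
have r3 := (mxrank_adds_leqif DY ((DX^C)%MS *m M)).1.
have r4 := mxrankM_maxl (DX^C)%MS M; rewrite mxrank_compl in r4.
have r5 := rank_leq_col DX.
rewrite /beta0 /dimH0_rips -/DX -/DY.
lia.
Qed.


Lemma main_lemma (X Y : finType) (dX : R -> X -> X -> R) (dY : R -> Y -> Y -> R) :
  is_DMS dX -> is_DMS dY ->
  (dI (beta0 F dX) (beta0 F dY) <= 2%:E * ddyn dX dY)%E.
Proof.
move=> [hXn hXp _ _] [hYn hYp _ _].
have hX0 t a b : 0 <= dX t a b by case: (hXp t).
have hXd t a : dX t a a = 0 by case: (hXp t).
have hY0 t a b : 0 <= dY t a b by case: (hYp t).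
have hYd t a : dY t a a = 0 by case: (hYp t).
have main (Z : Type) (phX : Z -> X) (phY : Z -> Y) e :
    Defs.surj phX -> Defs.surj phY -> is_eps_tripod dX dY phX phY e ->
    (dI (beta0 F dX) (beta0 F dY) <= (2 * e)%:E)%E.
  move=> sX sY tri.
  have he : 0 <= e.
    have /card_gt0P [x0 _] := hXn.
    have [z _] := sX x0.
    have [h _] := tri 0 z z.
    rewrite hYd in h.
    have h0 := bv_ge0 (0 - e, 0 + e) (fun t => hX0 t (phX z) (phX z)).
    lra.
  rewrite /dI; apply: ereal_inf_lbound; exists (2 * e) => //.
  split; first by rewrite mulr_ge0.
  move=> I delta hI hd; split.
    exact: dir hX0 hXd hY0 sX sY tri he hI hd.
  have tri' : is_eps_tripod dY dX phY phX e.
    by move=> t z z'; have [a b] := tri t z z'; split.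
  exact: dir hY0 hYd hX0 sY sX tri' he hI hd.
have h2 : (dI (beta0 F dX) (beta0 F dY) * (2^-1)%:E <= ddyn dX dY)%E.
  apply: le_ereal_inf_tmp => _ [Z [phX [phY [sX sY ->]]]].
  apply: le_ereal_inf_tmp => _ [e tri <-].
  have -> : e%:E = ((2 * e)%:E * (2^-1)%:E)%E.
    by rewrite -EFinM; congr EFin; rewrite mulrAC divff ?mul1r // pnatr_eq0.
  apply: lee_wpmul2r; first by rewrite lee_fin invr_ge0.
  exact: main _ _ _ _ sX sY tri.
have h3 := lee_wpmul2l (_ : (0 <= 2%:E)%E) h2.
apply: le_trans (h3 _); last by rewrite lee_fin.
by rewrite muleC -muleA -EFinM mulVf ?mule1 // pnatr_eq0.
Qed.

End Mx.

End Aux.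

Unset Implicit Arguments.

Theorem theorem4p5 (R : realType) (F : fieldType) (X Y : finType)
  (dX : R -> X -> X -> R) (dY : R -> Y -> Y -> R) :
  is_DMS dX -> is_DMS dY ->
  (dI (beta0 F dX) (beta0 F dY) <= 2%:E * ddyn dX dY)%E.
Proof. exact: main_lemma. Qed.
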